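(* If $D$ is finite and the Fischer space $\Pi(D)$ has at least one line that is not a vanishing set, then $\overline{\mathcal{A}}=\mathcal{A}(D)/\mathcal{V}(D)$ is the direct product of all its minimal ideals. Furthermore, $G$ transitively permutes the minimal ideals of $\overline{\mathcal{A}}$.
   Context: Let $G$ be a group generated by a conjugacy class $D$ of involutions such that for all $d,e\in D$ the order of $de$ is $1$, $2$ or $3$. The Fischer space $\Pi(D)$ has point set $D$ and lines the triples $\{d,e,d^e\}$ with $d,e\in D$ non-commuting. $\mathcal{A}(D)$ is the $\mathbb{F}_2$-vector space of finite subsets of $D$ under symmetric difference (basis $D$), with bilinear product determined by $d*e=d+e+f$ if $\{d,e,f\}$ is a line and $d*e=0$ otherwise; $G$ acts on it by linear extension of conjugation. The bilinear form $\langle\cdot,\cdot\rangle$ is determined by $\langle d,e\rangle=1$ if $d,e$ do not commute and $0$ otherwise; $\mathcal{V}(D)$ is its radical, and a finite subset of $D$ is called vanishing if it lies in $\mathcal{V}(D)$. *)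

(* Defs.v *)
From HB Require Import structures.
From mathcomp Require Import all_boot all_order all_algebra all_fingroup.
From mathcomp Require Import generic_quotient.
Set Implicit Arguments. Unset Strict Implicit. Unset Printing Implicit Defensive.
Import GRing.Theory.
Local Open Scope ring_scope.
Local Open Scope quotient_scope.

Section Fischer.
Variables (gT : finGroupType) (D : {set gT}).

Definition elD : Type := {x : gT | x \in D}.
HB.instance Definition _ := Finite.on elD.

(** A(D): F_2-vector space with basis D; a finite subset S of D is
    identified with its indicator function *)
Notation algA := {ffun elD -> 'F_2}.

Definition ncomm (d e : elD) : bool := (val d * val e != val e * val d)%g.

Definition bvec (d : elD) : algA := [ffun x => (x == d)%:R].

Definition indic (S : {set gT}) : algA := [ffun x => (val x \in S)%:R].

Definition prodD (d e : elD) : algA :=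
  if ncomm d e then bvec d + bvec e + [ffun x => (val x == (val d ^ val e)%g)%:R]
  else 0.

Definition mulA (X Y : algA) : algA :=
  [ffun x => \sum_(d : elD) \sum_(e : elD) X d * Y e * prodD d e x].

Definition formA (X Y : algA) : 'F_2 :=
  \sum_(d : elD) X d * \sum_(e : elD) (ncomm d e)%:R * Y e.

Definition inV (X : algA) : bool := [forall Y, formA X Y == 0].

Definition vanishing (S : {set gT}) : bool := (S \subset D) && inV (indic S).

Lemma formA_sub X Z Y : formA (X - Z) Y = formA X Y - formA Z Y.
Proof.
rewrite /formA -sumrB; apply: eq_bigr => d _.
by rewrite !ffunE mulrBl.
Qed.

Lemma formA0 Y : formA 0 Y = 0.
Proof. by rewrite /formA big1 // => d _; rewrite ffunE mul0r. Qed.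

Lemma formA_opp X Y : formA (- X) Y = - formA X Y.
Proof. by rewrite -sub0r formA_sub formA0 sub0r. Qed.

Definition eqV (X Y : algA) : bool := inV (X - Y).

Lemma eqV_refl : reflexive eqV.
Proof. by move=> X; apply/forallP => Y; rewrite subrr formA0. Qed.

Lemma eqV_sym : symmetric eqV.
Proof.
suff H : forall X Y, eqV X Y -> eqV Y X by move=> X Y; apply/idP/idP; apply: H.
move=> X Y /forallP H; apply/forallP => Z.
by rewrite -opprB formA_opp (eqP (H Z)) oppr0.
Qed.

Lemma eqV_trans : transitive eqV.
Proof.
move=> Y X Z /forallP H1 /forallP H2; apply/forallP => W.
have -> : X - Z = (X - Y) - - (Y - Z) by rewrite opprK addrA subrK.
by rewrite formA_sub formA_opp (eqP (H1 W)) (eqP (H2 W)) oppr0 subrr.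
Qed.

Canonical eqV_equiv := EquivRel eqV eqV_refl eqV_sym eqV_trans.

Definition Abar : Type := {eq_quot eqV}.
HB.instance Definition _ := [Finite of Abar by <:%/].

Definition zeroQ : Abar := \pi_Abar 0.
Definition addQ (x y : Abar) : Abar := \pi_Abar (repr x + repr y).
Definition mulQ (x y : Abar) : Abar := \pi_Abar (mulA (repr x) (repr y)).

(** ideals of the quotient algebra (over F_2 closure under scalars is
    automatic from closure under addition and containing 0) *)
Definition is_ideal (I : {set Abar}) : bool :=
  [&& zeroQ \in I,
      [forall x, forall y, (x \in I) ==> (y \in I) ==> (addQ x y \in I)] &
      [forall a, forall x, (x \in I) ==> (mulQ a x \in I) && (mulQ x a \in I)]].

Definition is_min_ideal (I : {set Abar}) : bool :=
  [&& is_ideal I, I != [set zeroQ] &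
      [forall J : {set Abar}, (is_ideal J && (J \subset I)) ==>
                              ((J == [set zeroQ]) || (J == I))]].

Definition min_ideals : {set {set Abar}} := [set I | is_min_ideal I].

Definition direct_sum_of_min_ideals : Prop :=
  forall x : Abar,
    (exists f : {set Abar} -> Abar,
        (forall I, I \in min_ideals -> f I \in I) /\
        x = \big[addQ/zeroQ]_(I in min_ideals) f I) /\
    (forall f f' : {set Abar} -> Abar,
        (forall I, I \in min_ideals -> f I \in I) ->
        (forall I, I \in min_ideals -> f' I \in I) ->
        \big[addQ/zeroQ]_(I in min_ideals) f I = x ->
        \big[addQ/zeroQ]_(I in min_ideals) f' I = x ->
        forall I, I \in min_ideals -> f I = f' I).

(** action of g on A(D) by linear extension of conjugation d |-> d^g *)
Definition actA (g : gT) (X : algA) : algA :=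
  [ffun d : elD => X (insubd d (val d ^ g^-1)%g)].

Definition actQ (g : gT) (x : Abar) : Abar := \pi_Abar (actA g (repr x)).

End Fischer.

(* Main.v *)
Require Import Defs.
From mathcomp Require Import all_boot all_order all_algebra all_fingroup.
From HB Require Import structures.
From mathcomp Require Import generic_quotient ring.
Set Implicit Arguments. Unset Strict Implicit. Unset Printing Implicit Defensive.
Import GRing.Theory.
Local Open Scope ring_scope.
Local Open Scope quotient_scope.

Lemma F2_cases (x : 'F_2) : x = 0 \/ x = 1.
Proof. case: x => [[|[|]]] //= H; [left|right]; exact: val_inj. Qed.
Lemma F2_11 : (1 + 1 : 'F_2) = 0. Proof. exact: val_inj. Qed.
Lemma F2_xx (x : 'F_2) : x + x = 0.
Proof. by case: (F2_cases x) => ->; [rewrite addr0 | exact: F2_11]. Qed.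
Lemma F2_opp (x : 'F_2) : - x = x.
Proof. by apply/eqP; rewrite eq_sym -subr_eq0 opprK F2_xx. Qed.

Section Basic.
Variables (gT : finGroupType) (D : {set gT}).
Local Notation elD := (elD D).
Local Notation algA := {ffun elD -> 'F_2}.
Local Notation mA := (@Defs.mulA gT D).

Lemma oppA (X : algA) : - X = X.
Proof. by apply/ffunP => x; rewrite !ffunE F2_opp. Qed.
Lemma addAA (X : algA) : X + X = 0.
Proof. by apply/ffunP => x; rewrite !ffunE F2_xx. Qed.

Definition scl (a : 'F_2) (X : algA) : algA := [ffun x => a * X x].

Lemma sum_ind1 (F : elD -> 'F_2) d : \sum_(e : elD) (e == d)%:R * F e = F d.
Proof.
rewrite (bigD1 d) //= big1 ?addr0 ?eqxx ?mul1r // => e /negbTE ->.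
by rewrite mul0r.
Qed.

Lemma ncomm_sym (d e : elD) : ncomm d e = ncomm e d.
Proof. by rewrite /ncomm eq_sym. Qed.

Lemma formAE (X Y : algA) : formA X Y = \sum_(d : elD) \sum_(e : elD) X d * (ncomm d e)%:R * Y e.
Proof. by apply: eq_bigr => d _; rewrite big_distrr; apply: eq_bigr => e _ /=; rewrite mulrA. Qed.

Lemma formA_sym (X Y : algA) : formA X Y = formA Y X.
Proof.
rewrite !formAE exchange_big; apply: eq_bigr => d _; apply: eq_bigr => e _ /=.
by rewrite ncomm_sym; ring.
Qed.

Lemma formA_bvec d (X : algA) : formA (bvec d) X = \sum_(e : elD) (ncomm d e)%:R * X e.
Proof.
rewrite /formA (eq_bigr (fun d' => (d' == d)%:R * \sum_(e : elD) (ncomm d' e)%:R * X e)).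
  by rewrite sum_ind1.
by move=> d' _; rewrite ffunE.
Qed.

Lemma formA_decomp (X Y : algA) : formA X Y = \sum_(e : elD) Y e * formA (bvec e) X.
Proof.
rewrite formA_sym {1}/formA; apply: eq_bigr => e _; by rewrite formA_bvec.
Qed.

Lemma formA_addl (X X' Y : algA) : formA (X + X') Y = formA X Y + formA X' Y.
Proof. by rewrite /formA -big_split; apply: eq_bigr => d _; rewrite ffunE mulrDl. Qed.

Lemma formA_scl a (X Y : algA) : formA (scl a X) Y = a * formA X Y.
Proof. by rewrite /formA big_distrr; apply: eq_bigr => d _ /=; rewrite ffunE mulrA. Qed.

Lemma inVP (X : algA) : reflect (forall Y, formA X Y = 0) (inV X).
Proof. by apply: (iffP forallP) => H Y; [apply/eqP|apply/eqP]. Qed.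

Lemma inV_bvecP (X : algA) : reflect (forall d, formA (bvec d) X = 0) (inV X).
Proof.
apply: (iffP (inVP X)) => H.
  by move=> d; rewrite formA_sym.
by move=> Y; rewrite formA_decomp big1 // => e _; rewrite H mulr0.
Qed.

Lemma inV0 : inV (0 : algA).
Proof. by apply/inVP => Y; rewrite formA0. Qed.
Lemma inVD (X Y : algA) : inV X -> inV Y -> inV (X + Y).
Proof. by move=> /inVP HX /inVP HY; apply/inVP => Z; rewrite formA_addl HX HY addr0. Qed.
Lemma inV_scl a (X : algA) : inV X -> inV (scl a X).
Proof. by move=> /inVP HX; apply/inVP => Z; rewrite formA_scl HX mulr0. Qed.
Lemma inV_sum (I : finType) (P : pred I) (F : I -> algA) :
  (forall i, P i -> inV (F i)) -> inV (\sum_(i | P i) F i).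
Proof. by move=> H; apply: (big_ind (fun X : algA => inV X)) => //; [exact: inV0 | exact: inVD]. Qed.


Local Notation Abar := (Abar D).
Definition pi (X : algA) : Abar := \pi_Abar X.

Lemma piP (X Y : algA) : reflect (pi X = pi Y) (inV (X - Y)).
Proof. exact: (@eqquotP _ _ Abar X Y). Qed.

Lemma pi_repr (X : algA) : inV (repr (pi X) - X).
Proof. by apply/piP; rewrite /pi reprK. Qed.

Lemma zeroQE : zeroQ D = pi 0. Proof. by []. Qed.

Lemma piD (X Y : algA) : addQ (pi X) (pi Y) = pi (X + Y).
Proof. by apply/piP; rewrite opprD addrACA; apply: inVD; apply: pi_repr. Qed.

Lemma addQA : associative (@addQ gT D).
Proof. by elim/quotW=> X; elim/quotW=> Y; elim/quotW=> Z; rewrite -!/(pi _) !piD addrA. Qed.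
Lemma addQC : commutative (@addQ gT D).
Proof. by elim/quotW=> X; elim/quotW=> Y; rewrite -!/(pi _) !piD addrC. Qed.
Lemma add0Q : left_id (zeroQ D) (@addQ gT D).
Proof. by elim/quotW=> X; rewrite -!/(pi _) zeroQE !piD add0r. Qed.
Lemma addQ0 : right_id (zeroQ D) (@addQ gT D).
Proof. by move=> x; rewrite addQC add0Q. Qed.
Lemma addQxx (x : Abar) : addQ x x = zeroQ D.
Proof. by elim/quotW: x => X; rewrite -!/(pi _) !piD addAA. Qed.
Lemma addQ_eq0 (x y : Abar) : addQ x y = zeroQ D -> x = y.
Proof. by move=> H; rewrite -[x]addQ0 -(addQxx y) addQA H add0Q. Qed.

End Basic.

HB.instance Definition _ (gT : finGroupType) (D : {set gT}) :=
  Monoid.isComLaw.Build (Abar D) (zeroQ D) (@addQ gT D) (@addQA gT D) (@addQC gT D) (@add0Q gT D).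
Section Grp.
Variables (gT : finGroupType) (G : {group gT}) (D : {set gT}).
Hypothesis Dnorm : forall g d, g \in G -> d \in D -> (d ^ g)%g \in D.
Hypothesis DsubG : forall d, d \in D -> d \in G.
Hypothesis Dinv : forall d, d \in D -> (d * d = 1)%g.
Hypothesis Dord : forall d e, d \in D -> e \in D -> #[(d * e)%g]%g \in [:: 1; 2; 3]%N.

Lemma invD d : d \in D -> (d^-1 = d)%g.
Proof. by move=> Dd; rewrite -[d^-1%g]mulg1 -(Dinv Dd) mulKg. Qed.

Lemma braid d e : d \in D -> e \in D -> (d * e != e * d)%g -> (d ^ e = e ^ d)%g.
Proof.
move=> Dd De nde; have := Dord Dd De; have := expg_order (d * e)%g.
rewrite !inE => Hx /or3P [] /eqP Ho; rewrite Ho in Hx.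
- move: nde; rewrite expg1 in Hx.
  have -> : e = d^-1%g by apply/eqP; rewrite eq_sym eq_invg_mul Hx.
  by rewrite invD // eqxx.
- move: nde; rewrite expgS expg1 in Hx.
  have : ((d * e)^-1 = d * e)%g.
    by apply/eqP; rewrite eq_invg_mul Hx.
  by rewrite invMg !invD // => ->; rewrite eqxx.
- rewrite !conjgE !invD //.
  have H1 : ((d * e * d) * (e * d * e) = 1)%g.
    by rewrite !expgS expg0 mulg1 !mulgA in Hx; rewrite !mulgA.
  have : ((d * e * d)^-1 = e * d * e)%g by apply/eqP; rewrite eq_invg_mul H1.
  by rewrite !invMg !invD // !mulgA => <-.
Qed.

Lemma ncomm_conjE (d e g : gT) :
  ((d ^ g) * (e ^ g) != (e ^ g) * (d ^ g))%g = (d * e != e * d)%g.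
Proof. by rewrite -!conjMg (inj_eq (conjg_inj g)). Qed.

Local Notation elD := (elD D).
Local Notation algA := {ffun elD -> 'F_2}.
Local Notation mA := (@Defs.mulA gT D).

Definition cj (g : gT) (d : elD) : elD := insubd d (val d ^ g)%g.

Lemma cjE g d : g \in G -> val (cj g d) = (val d ^ g)%g.
Proof. by move=> Gg; rewrite val_insubd Dnorm // (valP d). Qed.

Lemma cjK g : g \in G -> cancel (cj g) (cj g^-1).
Proof. by move=> Gg d; apply: val_inj; rewrite !cjE ?groupV // conjgK. Qed.
Lemma cjKV g : g \in G -> cancel (cj g^-1) (cj g).
Proof. by move=> Gg d; apply: val_inj; rewrite !cjE ?groupV // conjgKV. Qed.
Lemma cj_inj g : g \in G -> injective (cj g).
Proof. by move=> Gg; apply: can_inj (cjK Gg). Qed.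

Lemma actAE g (X : algA) d : actA g X d = X (cj g^-1 d).
Proof. by rewrite ffunE. Qed.

Lemma ncomm_cj g d e : g \in G -> ncomm (cj g d) (cj g e) = ncomm d e.
Proof. by move=> Gg; rewrite /ncomm !cjE // ncomm_conjE. Qed.

Lemma actA_bvec g e : g \in G -> actA g (bvec e) = bvec (cj g e).
Proof.
move=> Gg; apply/ffunP => x; rewrite !ffunE.
by rewrite (can2_eq (cjKV Gg) (cjK Gg)).
Qed.

Lemma actA_add g (X Y : algA) : actA g (X + Y) = actA g X + actA g Y.
Proof. by apply/ffunP => x; rewrite !ffunE. Qed.
Lemma actA0 g : actA g (0 : algA) = 0.
Proof. by apply/ffunP => x; rewrite !ffunE. Qed.
Lemma actA_opp g (X : algA) : actA g (- X) = - actA g X.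
Proof. by apply/ffunP => x; rewrite !ffunE. Qed.
Lemma actA_scl g a (X : algA) : actA g (scl a X) = scl a (actA g X).
Proof. by apply/ffunP => x; rewrite !ffunE. Qed.
Lemma actA_sum g (I : finType) (P : pred I) (F : I -> algA) :
  actA g (\sum_(i | P i) F i) = \sum_(i | P i) actA g (F i).
Proof. by apply/ffunP => x; rewrite !ffunE !sum_ffunE; apply: eq_bigr => i _; rewrite ffunE. Qed.

Lemma actA_comp g h (X : algA) : g \in G -> h \in G ->
  actA g (actA h X) = actA (h * g) X.
Proof.
move=> Gg Gh; apply/ffunP => x; rewrite !ffunE; congr (X _); apply: val_inj.
by rewrite !cjE ?groupV ?groupM // invMg conjgM.
Qed.

Lemma actA1 (X : algA) : actA 1 X = X.
Proof. by apply/ffunP => x; rewrite !ffunE; congr (X _); apply: val_inj; rewrite cjE ?invg1 ?conjg1. Qed.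

Lemma actAK g (X : algA) : g \in G -> actA g^-1 (actA g X) = X.
Proof. by move=> Gg; rewrite actA_comp ?groupV // mulgV actA1. Qed.
Lemma actAKV g (X : algA) : g \in G -> actA g (actA g^-1 X) = X.
Proof. by move=> Gg; rewrite actA_comp ?groupV // mulVg actA1. Qed.

Lemma formA_act g (X Y : algA) : g \in G -> formA (actA g X) (actA g Y) = formA X Y.
Proof.
move=> Gg; rewrite !formAE (reindex_inj (cj_inj Gg)); apply: eq_bigr => d _.
rewrite (reindex_inj (cj_inj Gg)); apply: eq_bigr => e _.
by rewrite !actAE !cjK // ncomm_cj.
Qed.

Lemma inV_act g (X : algA) : g \in G -> inV X -> inV (actA g X).
Proof.
move=> Gg /inVP HX; apply/inVP => Y.
by rewrite -(actAKV Y Gg) formA_act // HX.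
Qed.


Lemma scl1 (X : algA) : scl 1 X = X.
Proof. by apply/ffunP => x; rewrite !ffunE mul1r. Qed.
Lemma scl0 (X : algA) : scl 0 X = 0.
Proof. by apply/ffunP => x; rewrite !ffunE mul0r. Qed.

Lemma valG (d : elD) : val d \in G.
Proof. exact: DsubG (valP d). Qed.

Lemma comm_conj (d e : elD) : ~~ ncomm d e -> cj (val d) e = e.
Proof.
rewrite /ncomm negbK => /eqP H; apply: val_inj; rewrite cjE ?valG //.
by rewrite conjgE -H mulKg.
Qed.

Lemma ncomm_conj (d e : elD) : ncomm d e -> cj (val d) e = cj (val e) d.
Proof.
move=> H; apply: val_inj; rewrite !cjE ?valG //.
by rewrite (braid (valP e) (valP d)) // -/(ncomm e d) ncomm_sym.
Qed.

Lemma prodD_alt (d e : elD) :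
  prodD d e = if ncomm d e then bvec d + bvec e + bvec (cj (val e) d) else 0.
Proof.
rewrite /prodD; case: ifP => // _; congr (_ + _); apply/ffunP => x; rewrite !ffunE.
by rewrite -val_eqE /= cjE ?valG.
Qed.

Lemma prodD_sym (d e : elD) : prodD d e = prodD e d.
Proof.
rewrite !prodD_alt ncomm_sym; case: ifP => // H.
rewrite -(ncomm_conj H) [bvec e + _]addrC //.
Qed.

Lemma prodD_ad (d e : elD) :
  prodD d e = bvec e + actA (val d) (bvec e) + scl (ncomm d e)%:R (bvec d).
Proof.
rewrite prodD_alt actA_bvec ?valG //; case: ifP => H.
  by rewrite scl1 (ncomm_conj H) [RHS]addrC addrA.
by rewrite scl0 addr0 comm_conj ?H // addAA.
Qed.

Lemma mA_bvec_l d (X : algA) :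
  mA (bvec d) X = [ffun x => \sum_(e : elD) X e * prodD d e x].
Proof.
apply/ffunP => x; rewrite !ffunE.
rewrite (eq_bigr (fun d' => (d' == d)%:R * \sum_(e : elD) X e * prodD d' e x)).
  by rewrite sum_ind1.
by move=> d' _; rewrite big_distrr; apply: eq_bigr => e _ /=; rewrite !ffunE mulrA.
Qed.

Lemma sum_ind2 (F : elD -> 'F_2) d : \sum_(e : elD) F e * (d == e)%:R = F d.
Proof. by rewrite -(sum_ind1 F d); apply: eq_bigr => e _; rewrite mulrC eq_sym. Qed.

Lemma mA_ad d (X : algA) :
  mA (bvec d) X = X + actA (val d) X + scl (formA (bvec d) X) (bvec d).
Proof.
rewrite mA_bvec_l formA_bvec; apply/ffunP => x; rewrite !ffunE.
under eq_bigr => e _ do rewrite prodD_ad !ffunE !mulrDr.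
rewrite !big_split /= sum_ind2 sum_ind2 big_distrl /=.
congr (_ + _); apply: eq_bigr => e _ /=; ring.
Qed.

Lemma mA_sym (X Y : algA) : mA X Y = mA Y X.
Proof.
apply/ffunP => x; rewrite !ffunE exchange_big; apply: eq_bigr => d _.
apply: eq_bigr => e _ /=; rewrite prodD_sym; ring.
Qed.

Lemma mA_addl (X X' Y : algA) : mA (X + X') Y = mA X Y + mA X' Y.
Proof.
apply/ffunP => x; rewrite !ffunE -big_split; apply: eq_bigr => d _ /=.
rewrite -big_split; apply: eq_bigr => e _ /=; rewrite ffunE; ring.
Qed.

Lemma mA_addr (X Y Y' : algA) : mA X (Y + Y') = mA X Y + mA X Y'.
Proof. by rewrite mA_sym mA_addl !(mA_sym X). Qed.

Lemma mA_lin (X Y : algA) : mA X Y = \sum_(d : elD) scl (X d) (mA (bvec d) Y).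
Proof.
apply/ffunP => x; rewrite sum_ffunE !ffunE; apply: eq_bigr => d _.
rewrite mA_bvec_l !ffunE big_distrr; apply: eq_bigr => e _ /=; ring.
Qed.

Lemma inV_mAr (X Y : algA) : inV Y -> inV (mA X Y).
Proof.
move=> HY; rewrite mA_lin; apply: inV_sum => d _; apply: inV_scl.
rewrite mA_ad formA_sym (inVP _ HY) scl0 addr0.
by apply: inVD => //; apply: inV_act => //; exact: valG.
Qed.

Lemma inV_mAl (X Y : algA) : inV X -> inV (mA X Y).
Proof. by rewrite mA_sym; apply: inV_mAr. Qed.

Lemma actA_prodD g d e : g \in G -> actA g (prodD d e) = prodD (cj g d) (cj g e).
Proof.
move=> Gg; rewrite !prodD_alt ncomm_cj //; case: ifP => _; last exact: actA0.
rewrite !actA_add !actA_bvec ?valG //; congr (_ + bvec _); apply: val_inj.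
by rewrite !cjE ?valG ?Dnorm ?groupJ ?valG // conjJg.
Qed.

Lemma actA_mA g (X Y : algA) : g \in G -> actA g (mA X Y) = mA (actA g X) (actA g Y).
Proof.
move=> Gg; apply/ffunP => x; rewrite [LHS]ffunE !ffunE.
rewrite [RHS](reindex_inj (cj_inj Gg)); apply: eq_bigr => d _.
rewrite [RHS](reindex_inj (cj_inj Gg)); apply: eq_bigr => e _ /=.
by rewrite !actAE !cjK // -actA_prodD // actAE.
Qed.


Local Notation Abar := (Abar D).
Local Notation zQ := (zeroQ D).
Local Notation aQ := (@addQ gT D).

Lemma piM (X Y : algA) : mulQ (pi X) (pi Y) = pi (mA X Y).
Proof.
apply/piP; set rX := repr (pi X); set rY := repr (pi Y).
have -> : mA rX rY - mA X Y = mA (rX - X) rY + mA X (rY - Y).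
  by rewrite !oppA mA_addl mA_addr -!addrA (addrA (mA X rY)) addAA add0r.
by apply: inVD; [apply: inV_mAl | apply: inV_mAr]; apply: pi_repr.
Qed.

Lemma piA g (X : algA) : g \in G -> actQ g (pi X) = pi (actA g X).
Proof.
by move=> Gg; apply/piP; rewrite -actA_opp -actA_add; apply: inV_act => //; apply: pi_repr.
Qed.

Lemma mulQC (x y : Abar) : mulQ x y = mulQ y x.
Proof. by elim/quotW: x => X; elim/quotW: y => Y; rewrite -!/(pi _) !piM mA_sym. Qed.
Lemma mulQDl (x y z : Abar) : mulQ (addQ x y) z = addQ (mulQ x z) (mulQ y z).
Proof.
by elim/quotW: x => X; elim/quotW: y => Y; elim/quotW: z => Z; rewrite -!/(pi _) !(piM, piD) mA_addl.
Qed.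
Lemma mulQDr (x y z : Abar) : mulQ x (addQ y z) = addQ (mulQ x y) (mulQ x z).
Proof. by rewrite !(mulQC x) mulQDl. Qed.
Lemma mul0Q (x : Abar) : mulQ zQ x = zQ.
Proof.
by elim/quotW: x => X; rewrite -!/(pi _) zeroQE piM; apply/piP; rewrite subr0; apply: inV_mAl; apply: inV0.
Qed.
Lemma mulQ0 (x : Abar) : mulQ x zQ = zQ.
Proof. by rewrite mulQC mul0Q. Qed.

Lemma actQD g (x y : Abar) : g \in G -> actQ g (addQ x y) = addQ (actQ g x) (actQ g y).
Proof. by move=> Gg; elim/quotW: x => X; elim/quotW: y => Y; rewrite -!/(pi _) !(piA, piD) // actA_add. Qed.
Lemma actQ0 g : g \in G -> actQ g zQ = zQ.
Proof. by move=> Gg; rewrite zeroQE piA // actA0. Qed.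
Lemma actQM g (x y : Abar) : g \in G -> actQ g (mulQ x y) = mulQ (actQ g x) (actQ g y).
Proof. by move=> Gg; elim/quotW: x => X; elim/quotW: y => Y; rewrite -!/(pi _) !(piA, piM) // actA_mA. Qed.
Lemma actQ_comp g h (x : Abar) : g \in G -> h \in G -> actQ g (actQ h x) = actQ (h * g) x.
Proof. by move=> Gg Gh; elim/quotW: x => X; rewrite -!/(pi _) !piA ?groupM // actA_comp. Qed.
Lemma actQ1 (x : Abar) : actQ 1 x = x.
Proof. by elim/quotW: x => X; rewrite -!/(pi _) !piA // actA1. Qed.
Lemma actQK g (x : Abar) : g \in G -> actQ g^-1 (actQ g x) = x.
Proof. by move=> Gg; rewrite actQ_comp ?groupV // mulgV actQ1. Qed.
Lemma actQKV g (x : Abar) : g \in G -> actQ g (actQ g^-1 x) = x.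
Proof. by move=> Gg; rewrite actQ_comp ?groupV // mulVg actQ1. Qed.

Lemma mulQ_suml (I : finType) (P : pred I) (F : I -> Abar) y :
  mulQ (\big[aQ/zQ]_(i | P i) F i) y = \big[aQ/zQ]_(i | P i) mulQ (F i) y.
Proof. by apply: (big_morph (fun x => mulQ x y)) => [a b|]; [exact: mulQDl | exact: mul0Q]. Qed.
Lemma mulQ_sumr (I : finType) (P : pred I) (F : I -> Abar) y :
  mulQ y (\big[aQ/zQ]_(i | P i) F i) = \big[aQ/zQ]_(i | P i) mulQ y (F i).
Proof. by rewrite mulQC mulQ_suml; apply: eq_bigr => i _; rewrite mulQC. Qed.
Lemma actQ_sum g (I : finType) (P : pred I) (F : I -> Abar) : g \in G ->
  actQ g (\big[aQ/zQ]_(i | P i) F i) = \big[aQ/zQ]_(i | P i) actQ g (F i).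
Proof. by move=> Gg; apply: (big_morph (actQ g)) => [a b|]; [exact: actQD | exact: actQ0]. Qed.
Lemma pi_sum (I : finType) (P : pred I) (F : I -> algA) :
  pi (\sum_(i | P i) F i) = \big[aQ/zQ]_(i | P i) pi (F i).
Proof. apply: (big_rec2 (fun X y => pi X = y)) => [|i X y _ <-]; [by rewrite zeroQE | by rewrite piD]. Qed.

Hypothesis Dtrans : forall d e, d \in D -> e \in D -> exists2 g, g \in G & e = (d ^ g)%g.
Hypothesis Hline : exists d e : elD,
  ncomm d e && ~~ vanishing D [set val d; val e; (val d ^ val e)%g].

Lemma excl3 (p q r : bool) : ~~ (p && q) -> ~~ (p && r) -> ~~ (q && r) ->
  (p || q || r)%:R = p%:R + q%:R + r%:R :> 'F_2.
Proof. by case: p; case: q; case: r => //= _ _ _; rewrite ?addr0 ?add0r. Qed.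

Lemma indic_line (d e : elD) : ncomm d e ->
  indic D [set val d; val e; (val d ^ val e)%g] = prodD d e.
Proof.
move=> H; rewrite /prodD H; apply/ffunP => x; rewrite !ffunE !inE -!val_eqE /=.
move: H; rewrite /ncomm; set a := val d; set b := val e => H.
have nab : a != b by apply: contra H => /eqP ->.
have nca : (a ^ b)%g != a.
  apply: contra H => /eqP Hc; apply/eqP.
  by rewrite -{2}Hc conjgE mulKVg.
have ncb : (a ^ b)%g != b.
  by apply: contra nab => /eqP Hc; apply/eqP; apply: (conjg_inj b); rewrite Hc conjgE mulKg.
apply: excl3; apply/andP => [[/eqP -> /eqP]] => Habs.
- by move/eqP: Habs; apply/negP.
- by move/eqP: Habs; rewrite eq_sym; apply/negP.
- by move/eqP: Habs; rewrite eq_sym; apply/negP.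
Qed.

Lemma mA_bvec (d e : elD) : mA (bvec d) (bvec e) = prodD d e.
Proof.
rewrite mA_bvec_l; apply/ffunP => x; rewrite ffunE.
rewrite (eq_bigr (fun e' => (e' == e)%:R * prodD d e' x)) ?sum_ind1 //.
by move=> e' _; rewrite ffunE.
Qed.

Lemma nonzero_prod : exists d e : elD, mulQ (pi (bvec d)) (pi (bvec e)) != zQ.
Proof.
case: Hline => d [e /andP [H Hv]]; exists d, e.
rewrite piM mA_bvec zeroQE; apply/eqP => /piP; rewrite subr0.
apply/negP; move: Hv; rewrite /vanishing negb_and => /orP [|//].
  case/subsetPn => y Hy /negP []; move: Hy; rewrite !inE.
  move=> Hy; case/orP: Hy => Hy; first case/orP: Hy => Hy.
  - by rewrite (eqP Hy) (valP d).
  - by rewrite (eqP Hy) (valP e).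
  - by rewrite (eqP Hy) Dnorm // ?valG // (valP d).
by rewrite indic_line.
Qed.

Lemma decompA (Y : algA) : Y = \sum_(e : elD) scl (Y e) (bvec e).
Proof.
apply/ffunP => x; rewrite sum_ffunE -[LHS](sum_ind1 Y x).
by apply: eq_bigr => e _ /=; rewrite !ffunE eq_sym mulrC.
Qed.

Lemma closed_sum (I : {set Abar}) (J : finType) (P : pred J) (F : J -> Abar) :
  zQ \in I -> (forall x y, x \in I -> y \in I -> aQ x y \in I) ->
  (forall j, P j -> F j \in I) -> \big[aQ/zQ]_(j | P j) F j \in I.
Proof. by move=> I0 ID HF; apply: (big_ind (fun x => x \in I)). Qed.

Lemma Ginv (I : {set Abar}) :
  zQ \in I -> (forall x y, x \in I -> y \in I -> aQ x y \in I) ->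
  (forall g x, g \in G -> x \in I -> actQ g x \in I) ->
  (forall d x, x \in I -> mulQ (pi (bvec d)) x \in I) ->
  (exists2 x, x \in I & x != zQ) -> forall y, y \in I.
Proof.
move=> I0 ID IG IM [x Ix nx].
move: Ix nx; elim/quotW: x => X; rewrite -/(pi X) => IX nX.
have [d Hd] : exists d, formA (bvec d) X != 0.
  case: (pickP (fun d => formA (bvec d) X != 0)) => [d Hd | H]; first by exists d.
  move/negP: nX; case.
  rewrite zeroQE; apply/eqP/piP; rewrite subr0; apply/inV_bvecP => d.
  by apply/eqP/negbNE; rewrite H.
have Hd1 : formA (bvec d) X = 1 by case: (F2_cases (formA (bvec d) X)) Hd => ->; rewrite ?eqxx.
have Id : pi (bvec d) \in I.
  have -> : pi (bvec d) = aQ (mulQ (pi (bvec d)) (pi X)) (aQ (pi X) (actQ (val d) (pi X))).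
    rewrite piM piA ?valG // !piD mA_ad Hd1 scl1; congr pi.
    by rewrite addrAC addAA add0r.
  apply: (ID); first exact: IM.
  apply: (ID) => //; exact: IG (valG d) IX.
have Ie : forall e, pi (bvec e) \in I.
  move=> e; have [g Gg He] := Dtrans (valP d) (valP e).
  have -> : e = cj g d by apply: val_inj; rewrite cjE.
  by rewrite -actA_bvec // -piA //; apply: (IG).
elim/quotW => Y; rewrite -/(pi Y) (decompA Y) pi_sum; apply: closed_sum => // e _.
by case: (F2_cases (Y e)) => ->; [rewrite scl0 -zeroQE | rewrite scl1; exact: Ie].
Qed.

Lemma Ann0 (x : Abar) : (forall y, mulQ x y = zQ) -> x = zQ.
Proof.
move=> Hx; case: (eqVneq x zQ) => // nx; exfalso.
pose I := [set z : Abar | [forall y, mulQ z y == zQ]].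
have HI : forall z, z \in I.
  apply: Ginv.
  - by rewrite inE; apply/forallP => y; rewrite mul0Q.
  - move=> a b; rewrite !inE => /forallP Ha /forallP Hb; apply/forallP => y.
    by rewrite mulQDl (eqP (Ha y)) (eqP (Hb y)) add0Q.
  - move=> g a Gg; rewrite !inE => /forallP Ha; apply/forallP => y.
    by rewrite -(actQKV y Gg) -actQM // (eqP (Ha (actQ g^-1 y))) actQ0.
  - move=> d a; rewrite !inE => /forallP Ha; apply/forallP => y.
    by rewrite (mulQC _ a) (eqP (Ha _)) mul0Q.
  - by exists x => //; rewrite inE; apply/forallP => y; rewrite Hx.
case: nonzero_prod => d [e]; have := HI (pi (bvec d)); rewrite inE => /forallP H.
by rewrite (eqP (H _)) eqxx.
Qed.

Lemma Ann_ex (x : Abar) : x != zQ -> exists y, mulQ x y != zQ.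
Proof.
move=> nx; case: (pickP (fun y => mulQ x y != zQ)) => [y Hy | H]; first by exists y.
by case/negP: nx; apply/eqP/Ann0 => y; apply/eqP/negbNE; rewrite H.
Qed.

Local Notation mins := (min_ideals D).
Definition img g (I : {set Abar}) := [set actQ g x | x in I].

Lemma idealP (I : {set Abar}) : reflect
  [/\ zQ \in I, forall x y, x \in I -> y \in I -> aQ x y \in I &
      forall a x, x \in I -> mulQ a x \in I] (is_ideal I).
Proof.
apply: (iffP and3P) => [[I0 /forallP HD /forallP HM] | [I0 HD HM]]; split => //.
- move=> x y Hx Hy; have /forallP/(_ y) := HD x.
  by rewrite Hx Hy.
- by move=> a x Hx; have /forallP/(_ x) := HM a; rewrite Hx /= => /andP [].
- apply/forallP => x; apply/forallP => y; apply/implyP => Hx; apply/implyP => Hy.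
  exact: HD.
- apply/forallP => a; apply/forallP => x; apply/implyP => Hx.
  by rewrite HM // mulQC HM.
Qed.

Lemma minP I : I \in mins -> [/\ is_ideal I, I != [set zQ] &
  forall J, is_ideal J -> J \subset I -> J = [set zQ] \/ J = I].
Proof.
rewrite inE => /and3P [HI nI /forallP HJ]; split => // J IJ sJ.
by have := HJ J; rewrite IJ sJ /= => /orP [] /eqP; [left|right].
Qed.

Lemma minI I : is_ideal I -> I != [set zQ] ->
  (forall J, is_ideal J -> J \subset I -> J = [set zQ] \/ J = I) -> I \in mins.
Proof.
move=> II nI H; rewrite inE; apply/and3P; split => //; apply/forallP => J.
by apply/implyP => /andP [IJ sJ]; case: (H J IJ sJ) => ->; rewrite eqxx ?orbT.
Qed.

Lemma nz_elem (I : {set Abar}) : zQ \in I -> I != [set zQ] -> exists2 x, x \in I & x != zQ.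
Proof.
move=> I0 nI; case: (pickP (fun x => (x \in I) && (x != zQ))) => [x /andP[]|H].
  by exists x.
case/eqP: nI; apply/setP => x; rewrite inE; apply/idP/eqP => [Hx|->//].
by apply/eqP; have := H x; rewrite Hx /= => /negbFE.
Qed.

Lemma img_mem g I y : g \in G -> (y \in img g I) = (actQ g^-1 y \in I).
Proof.
move=> Gg; apply/imsetP/idP => [[x Ix ->]|Hy]; first by rewrite actQK.
by exists (actQ g^-1 y) => //; rewrite actQKV.
Qed.

Lemma img_ideal g I : g \in G -> is_ideal I -> is_ideal (img g I).
Proof.
move=> Gg /idealP [I0 ID IM]; apply/idealP; split.
- by rewrite img_mem // actQ0 ?groupV.
- by move=> x y; rewrite !img_mem // actQD ?groupV //; exact: ID.
- by move=> a x; rewrite !img_mem // actQM ?groupV //; exact: IM.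
Qed.

Lemma img_set0 g : g \in G -> img g [set zQ] = [set zQ].
Proof. by move=> Gg; rewrite /img imset_set1 actQ0. Qed.

Lemma img_K g I : g \in G -> img g^-1 (img g I) = I.
Proof.
by move=> Gg; apply/setP => y; rewrite img_mem ?groupV // invgK img_mem // actQK.
Qed.
Lemma img_KV g I : g \in G -> img g (img g^-1 I) = I.
Proof. by move=> Gg; rewrite -{1}(invgK g) img_K ?groupV. Qed.

Lemma img_min g I : g \in G -> I \in mins -> img g I \in mins.
Proof.
move=> Gg /minP [II nI HJ]; apply: minI; first exact: img_ideal.
  by apply: contra nI => /eqP H; rewrite -(img_K I Gg) H img_set0 ?groupV.
move=> J IJ sJ.
have sJ' : img g^-1 J \subset I by rewrite -(img_K I Gg); apply: imsetS.
case: (HJ _ (img_ideal (groupVr Gg) IJ) sJ') => H; [left|right].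
  by rewrite -(img_KV J Gg) H img_set0.
by rewrite -(img_KV J Gg) H.
Qed.

Lemma min_disj I J x : I \in mins -> J \in mins -> x \in I -> x \in J -> x != zQ -> I = J.
Proof.
move=> HI HJ xI xJ nx; have [II nI HI'] := minP HI; have [IJ nJ HJ'] := minP HJ.
have [I0 ID IM] := idealP _ II; have [J0 JD JM] := idealP _ IJ.
have IIJ : is_ideal (I :&: J).
  apply/idealP; split; first by rewrite inE I0 J0.
    by move=> a b; rewrite !inE => /andP [aI aJ] /andP [bI bJ]; rewrite ID ?JD.
  by move=> a b; rewrite !inE => /andP [bI bJ]; rewrite IM ?JM.
case: (HI' _ IIJ (subsetIl I J)) => H.
  have : x \in I :&: J by rewrite inE xI xJ.
  by rewrite H inE => /eqP Hx; rewrite Hx eqxx in nx.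
have sIJ : I \subset J by apply/setIidPl.
by case: (HJ' _ II sIJ) => // H'; rewrite H' eqxx in nI.
Qed.

Lemma orth I K a b : I \in mins -> K \in mins -> I != K -> a \in I -> b \in K -> mulQ a b = zQ.
Proof.
move=> HI HK nIK aI bK; case: (eqVneq (mulQ a b) zQ) => // nz.
case/eqP: nIK; apply: (min_disj HI HK _ _ nz).
  by have [II _ _] := minP HI; have [_ _ IM] := idealP _ II; rewrite mulQC IM.
by have [IK _ _] := minP HK; have [_ _ KM] := idealP _ IK; rewrite KM.
Qed.

Lemma ex_min : exists I, I \in mins.
Proof.
have PT : is_ideal [set: Abar] && ([set: Abar] != [set zQ]).
  apply/andP; split; first by apply/idealP; split => *; rewrite inE.
  case: nonzero_prod => d [e] Hw; apply/eqP => HT.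
  have : mulQ (pi (bvec d)) (pi (bvec e)) \in [set: Abar] by rewrite inE.
  by rewrite HT inE (negbTE Hw).
case: (@arg_minnP _ [set: Abar] (fun J : {set Abar} => is_ideal J && (J != [set zQ])) (fun J : {set Abar} => #|J|) PT) => I /andP [II nI] Hmin.
exists I; apply: minI => // J IJ sJ; case: (eqVneq J [set zQ]) => [->|nJ]; [by left | right].
by apply/eqP; rewrite eqEcard sJ; apply: Hmin; rewrite IJ nJ.
Qed.

Definition Ospan (I : {set Abar}) := [set y : Abar | [exists f : {ffun gT -> Abar},
  [forall (g | g \in G), f g \in I] && (y == \big[aQ/zQ]_(g in G) actQ g (f g))]].

Lemma OspanP (I : {set Abar}) y : reflect (exists2 f : {ffun gT -> Abar}, (forall g, g \in G -> f g \in I) &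
  y = \big[aQ/zQ]_(g in G) actQ g (f g)) (y \in Ospan I).
Proof.
rewrite inE; apply: (iffP existsP) => [[f /andP [/forall_inP Hf /eqP ->]] | [f Hf ->]].
  by exists f.
by exists f; rewrite eqxx andbT; apply/forall_inP.
Qed.

Lemma Ospan_all I : I \in mins -> forall y, y \in Ospan I.
Proof.
case/minP => II nI _; have [I0 ID IM] := idealP _ II.
apply: Ginv.
- apply/OspanP; exists [ffun _ => zQ] => [g _|]; first by rewrite ffunE.
  by rewrite big1 // => g Gg; rewrite ffunE actQ0.
- move=> a b /OspanP [f Hf ->] /OspanP [f' Hf' ->]; apply/OspanP.
  exists [ffun g => aQ (f g) (f' g)] => [g Gg|]; first by rewrite ffunE ID ?Hf ?Hf'.
  by rewrite -big_split; apply: eq_bigr => g Gg; rewrite ffunE actQD.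
- move=> h a Gh /OspanP [f Hf ->]; apply/OspanP.
  exists [ffun g => f (g * h^-1)%g] => [g Gg|]; first by rewrite ffunE Hf ?groupM ?groupV.
  rewrite actQ_sum // [RHS](reindex_inj (mulIg h)) /=.
  apply: eq_big => [j|j Gj]; first by rewrite groupMr.
  by rewrite ffunE mulgK actQ_comp.
- move=> d a /OspanP [f Hf ->]; apply/OspanP.
  exists [ffun g => mulQ (actQ g^-1 (pi (bvec d))) (f g)] => [g Gg|].
    by rewrite ffunE IM ?Hf.
  by rewrite mulQ_sumr; apply: eq_bigr => g Gg; rewrite ffunE actQM // actQKV.
- have [x Ix nx] := nz_elem I0 nI; exists x => //; apply/OspanP.
  exists [ffun g => if g == 1%g then x else zQ] => [g Gg|].
    by rewrite ffunE; case: ifP.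
  rewrite (bigD1 1%g) ?group1 //= ffunE eqxx actQ1 big1 ?addQ0 //.
  by move=> g /andP [Gg ng]; rewrite ffunE (negbTE ng) actQ0.
Qed.

Lemma trans_min I J : I \in mins -> J \in mins -> exists2 g, g \in G & img g I = J.
Proof.
move=> HI HJ; have [IJ nJ _] := minP HJ; have [J0 JD JM] := idealP _ IJ.
have [y Jy ny] := nz_elem J0 nJ; have [z Hz] := Ann_ex ny.
have /OspanP [f Hf Ez] := Ospan_all HI z.
move: Hz; rewrite Ez mulQ_sumr => Hz.
have [g Gg Hg] : exists2 g, g \in G & mulQ y (actQ g (f g)) != zQ.
  case: (pickP (fun g => (g \in G) && (mulQ y (actQ g (f g)) != zQ))) => [g /andP[]|H].
    by exists g.
  case/negP: Hz; apply/eqP; rewrite big1 // => g Gg.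
  by have := H g; rewrite Gg /= => /negbFE/eqP.
exists g => //; apply: (min_disj (img_min Gg HI) HJ _ _ Hg).
  have [II _ _] := minP HI; have [_ _ IM] := idealP _ (img_ideal Gg II).
  by apply: IM; apply/imsetP; exists (f g) => //; exact: Hf.
by rewrite mulQC; exact: JM.
Qed.

Lemma dsum_ex x : exists f : {set Abar} -> Abar,
  (forall I, I \in mins -> f I \in I) /\ x = \big[aQ/zQ]_(I in mins) f I.
Proof.
have [I0 H0] := ex_min; have /OspanP [f Hf ->] := Ospan_all H0 x.
exists (fun J => \big[aQ/zQ]_(g in G | img g I0 == J) actQ g (f g)); split.
  move=> J HJ; have [IJ _ _] := minP HJ; have [J0 JD JM] := idealP _ IJ.
  apply: closed_sum => // g /andP [Gg /eqP <-].
  by apply/imsetP; exists (f g) => //; exact: Hf.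
rewrite (partition_big (fun g => img g I0) (fun J => J \in mins)) //.
by move=> g Gg; exact: img_min.
Qed.

Lemma dsum_uniq x (f f' : {set Abar} -> Abar) :
  (forall I, I \in mins -> f I \in I) -> (forall I, I \in mins -> f' I \in I) ->
  \big[aQ/zQ]_(I in mins) f I = x -> \big[aQ/zQ]_(I in mins) f' I = x ->
  forall I, I \in mins -> f I = f' I.
Proof.
move=> Hf Hf' Ef Ef' I HI.
pose h := fun J => aQ (f J) (f' J).
have Hh : \big[aQ/zQ]_(J in mins) h J = zQ by rewrite big_split /= Ef Ef' addQxx.
have hmin : forall J, J \in mins -> h J \in J.
  move=> J HJ; have [IJ _ _] := minP HJ; have [_ JD _] := idealP _ IJ.
  by apply: JD; [apply: Hf | apply: Hf'].
apply: addQ_eq0; apply: Ann0 => y.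
have [k [Hk ->]] := dsum_ex y.
rewrite mulQ_sumr big1 // => K HK.
case: (eqVneq I K) => [<- | nIK]; last exact: (orth HI HK nIK (hmin I HI) (Hk K HK)).
have := congr1 (fun z => mulQ z (k I)) Hh; rewrite /= mul0Q mulQ_suml (bigD1 I) //=.
rewrite big1 ?addQ0 // => K' /andP [HK' nK'].
exact: (orth HK' HI nK' (hmin _ HK') (Hk I HI)).
Qed.


Lemma main_sec : direct_sum_of_min_ideals D /\
  (forall g, g \in G -> forall I, I \in min_ideals D ->
       [set actQ g x | x in I] \in min_ideals D) /\
  (forall I J, I \in min_ideals D -> J \in min_ideals D ->
       exists2 g, g \in G & [set actQ g x | x in I] = J).
Proof.
split; [|split].
- move=> x; split; first exact: dsum_ex.
  by move=> f f' Hf Hf' Ef Ef'; apply: (dsum_uniq Hf Hf' Ef Ef').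
- by move=> g Gg I HI; apply: img_min.
- exact: trans_min.
Qed.

End Grp.

Theorem corollary2p6 (gT : finGroupType) (G : {group gT}) (D : {set gT})
  (HDclass : exists2 x, x \in G & D = (x ^: G)%g)
  (HDinv : forall d, d \in D -> #[d]%g = 2)
  (HDgen : <<D>>%g = G)
  (HDord : forall d e, d \in D -> e \in D -> #[(d * e)%g]%g \in [:: 1; 2; 3])
  (Hline : exists d e : elD D,
      ncomm d e && ~~ vanishing D [set val d; val e; (val d ^ val e)%g]) :
  direct_sum_of_min_ideals D /\
  (forall g, g \in G -> forall I, I \in min_ideals D ->
       [set actQ g x | x in I] \in min_ideals D) /\
  (forall I J, I \in min_ideals D -> J \in min_ideals D ->
       exists2 g, g \in G & [set actQ g x | x in I] = J).
Proof.
case: HDclass => x Gx HD.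
have Dnorm : forall g d, g \in G -> d \in D -> (d ^ g)%g \in D.
  move=> g d Gg; rewrite HD => /imsetP [y Gy ->]; rewrite -conjgM.
  by apply: memJ_class; rewrite groupM.
have DsubG : forall d, d \in D -> d \in G.
  by move=> d; rewrite HD; apply/subsetP; apply: class_subG Gx (subxx G).
have Dinv : forall d, d \in D -> (d * d = 1)%g.
  by move=> d Dd; have := expg_order d; rewrite HDinv // expgS expg1.
have Dtrans : forall d e, d \in D -> e \in D -> exists2 g, g \in G & e = (d ^ g)%g.
  move=> d e; rewrite HD => /imsetP [a Ga ->] /imsetP [b Gb ->].
  by exists (a^-1 * b)%g; [rewrite groupM ?groupV | rewrite -conjgM mulKVg].
exact: (main_sec Dnorm DsubG Dinv HDord Dtrans Hline).
Qed.
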